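(* Let $\Omega\subset\mathbf R^n$ ($n=1,2$) be a bounded open domain, and let $0<\rho_1\le\rho_2\le\cdots$ be the positive eigenvalues of $-\Delta$ on $\Omega$ with Neumann boundary conditions (as ordered in the context). Let $B=\begin{pmatrix} f_u & f_v\\ g_u & g_v\end{pmatrix}$ be a real matrix with $f_u>0$, $g_v<0$, $f_ug_v-f_vg_u>0$ and $f_u+g_v<0$, and let $D=\mathrm{diag}(1,d)$. For $\lambda=(\gamma,d)$ with $\gamma,d>0$ and $k=1,2,\ldots$, put $E_k(\lambda)=-\rho_kD+\gamma B$ and let $$\beta_{k1,2}(\lambda)=\tfrac12\Big(\mathrm{tr}\,E_k(\lambda)\pm\big((\mathrm{tr}\,E_k(\lambda))^2-4\det E_k(\lambda)\big)^{1/2}\Big)$$ (upper sign for $\beta_{k1}$, lower sign for $\beta_{k2}$). Let $\Lambda_1$, $R_1$, $R_2$ be as defined in the context. Then $$\Re\beta_{11}(\lambda)<0,\ \Re\beta_{12}(\lambda)<0 \text{ if } \lambda\in R_1;\qquad \beta_{11}(\lambda)=0,\ \beta_{12}(\lambda)<0 \text{ if } \lambda\in\Lambda_1;\qquad \beta_{11}(\lambda)>0,\ \beta_{12}(\lambda)<0 \text{ if } \lambda\in R_2.$$ Furthermore, for $k=2,3,\ldots$, $\Re\beta_{k1}(\lambda)<0$ and $\Re\beta_{k2}(\lambda)<0$ if $\lambda\in\Lambda_1$.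
   Context: The numbers $\beta_{k1},\beta_{k2}$ are the eigenvalues of the linearized operator $L_\lambda=\Delta D+\gamma B$ (acting on pairs of functions with Neumann boundary conditions) restricted to the span of the $k$-th Laplace eigenfunction. For $k=1,2$ define, for $\gamma>\rho_k/f_u$, $$d_k(\gamma)=\frac{\gamma^2\det(B)+\gamma\rho_k|g_v|}{\rho_k(\gamma f_u-\rho_k)},$$ so that $\det E_k(\lambda)=0$ exactly when $d=d_k(\gamma)$; the set $\{(\gamma,d):d=d_k(\gamma),\ \gamma>\rho_k/f_u\}$ is the positive branch of the curve $\Lambda_k$. Let $\gamma_1$ be the value of $\gamma$ at which the positive branches of $\Lambda_1$ and $\Lambda_2$ cross. Then $\Lambda_1$ here denotes $\{(\gamma,d_1(\gamma)):\rho_1/f_u<\gamma<\gamma_1\}$, and $R_1=\{(\gamma,d):\rho_1/f_u<\gamma<\gamma_1,\ 0<d<d_1(\gamma)\}$, $R_2=\{(\gamma,d):\rho_1/f_u<\gamma<\gamma_1,\ d_1(\gamma)<d<d_2(\gamma)\}$. *)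

(* Defs.v *)
From HB Require Import structures.
From mathcomp Require Import all_boot all_order all_algebra.
From mathcomp Require Import complex.
Set Implicit Arguments. Unset Strict Implicit. Unset Printing Implicit Defensive.
Import Order.TTheory GRing.Theory Num.Theory.
Local Open Scope ring_scope.

Section Defs.
Variable R : rcfType.

Definition Bmat (fu fv gu gv : R) : 'M[R]_2 :=
  \matrix_(i < 2, j < 2)
    if i == 0 :> nat then (if j == 0 :> nat then fu else fv)
    else (if j == 0 :> nat then gu else gv).

Definition Dmat (d : R) : 'M[R]_2 :=
  \matrix_(i < 2, j < 2)
    if i == j then (if i == 0 :> nat then 1 else d) else 0.

Definition Emat (fu fv gu gv rho gamma d : R) : 'M[R]_2 :=
  - (rho *: Dmat d) + gamma *: Bmat fu fv gu gv.

Definition beta1 (fu fv gu gv rho gamma d : R) : R[i] :=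
  let E := Emat fu fv gu gv rho gamma d in
  (((\tr E)%:C + sqrtc (((\tr E) ^+ 2 - 4 * \det E)%:C)) / 2)%C.

Definition beta2 (fu fv gu gv rho gamma d : R) : R[i] :=
  let E := Emat fu fv gu gv rho gamma d in
  (((\tr E)%:C - sqrtc (((\tr E) ^+ 2 - 4 * \det E)%:C)) / 2)%C.

Definition dk (fu fv gu gv rho gamma : R) : R :=
  (gamma ^+ 2 * \det (Bmat fu fv gu gv) + gamma * rho * `|gv|)
    / (rho * (gamma * fu - rho)).

End Defs.

(* Main.v *)
Require Import Defs.
From HB Require Import structures.
From mathcomp Require Import all_boot all_order all_algebra.
From mathcomp Require Import complex ring lra zify.
Import Order.TTheory GRing.Theory Num.Theory.
Local Open Scope ring_scope.

Lemma Re_div2 (R : rcfType) (z : R[i]) : complex.Re (z / 2)%C = complex.Re z / 2.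
Proof. case: z => a b; simpc => /=. by field. Qed.
Lemma Im_div2 (R : rcfType) (z : R[i]) : complex.Im (z / 2)%C = complex.Im z / 2.
Proof. case: z => a b; simpc => /=. by field. Qed.

Lemma sqrtc_real (R : rcfType) (x : R) : exists a b : R,
  sqrtc (x%:C)%C = (a +i* b)%C /\ 0 <= a /\ a^+2 - b^+2 = x /\ a * b = 0.
Proof.
case E: (sqrtc x%:C)%C => [a b]; exists a, b; split => //.
have := sqr_sqrtc (x%:C)%C; rewrite E; simpc => -[h1 h2].
split; last split.
- move: E; rewrite /sqrtc /= => -[<- _]; exact: sqrtr_ge0.
- by rewrite !expr2.
- lra.
Qed.
Definition bp (R : rcfType) (t D : R) : R[i] := ((t%:C + sqrtc ((t ^+ 2 - 4 * D)%:C)) / 2)%C.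
Definition bm (R : rcfType) (t D : R) : R[i] := ((t%:C - sqrtc ((t ^+ 2 - 4 * D)%:C)) / 2)%C.
Arguments bp {R}. Arguments bm {R}.

Lemma b_stable (R : rcfType) (t D : R) : t < 0 -> 0 < D ->
  complex.Re (bp t D) < 0 /\ complex.Re (bm t D) < 0.
Proof.
move=> ht hD; have [a [b [E [ha [h1 h2]]]]] := @sqrtc_real R (t ^+ 2 - 4 * D).
rewrite /bp /bm E !Re_div2 /=.
have [->|hb] := eqVneq a 0; first by split; lra.
have b0 : b = 0 by move: h2 => /eqP; rewrite mulf_eq0 (negPf hb) => /eqP.
subst b; split; nra.
Qed.

Lemma b_zero (R : rcfType) (t : R) : t < 0 -> bp t 0 = 0 /\ bm t 0 < 0.
Proof.
move=> ht; have [a [b [E [ha [h1 h2]]]]] := @sqrtc_real R (t ^+ 2 - 4 * 0).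
have [a0|hb] := eqVneq a 0; first by subst a; clear E; exfalso; nra.
have b0 : b = 0 by move: h2 => /eqP; rewrite mulf_eq0 (negPf hb) => /eqP.
subst b.
have at' : a = - t by clear E; nra.
rewrite /bp /bm E; split.
- apply/eqP; rewrite eq_complex; apply/andP; split; apply/eqP; rewrite ?Re_div2 ?Im_div2 /=; lra.
- rewrite ltcE; apply/andP; split; first by apply/eqP; rewrite Im_div2 /=; lra.
  rewrite Re_div2 /=; lra.
Qed.

Lemma b_saddle (R : rcfType) (t D : R) : D < 0 -> 0 < bp t D /\ bm t D < 0.
Proof.
move=> hD; have [a [b [E [ha [h1 h2]]]]] := @sqrtc_real R (t ^+ 2 - 4 * D).
have [a0|hb] := eqVneq a 0; first by subst a; clear E; exfalso; nra.
have b0 : b = 0 by move: h2 => /eqP; rewrite mulf_eq0 (negPf hb) => /eqP.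
subst b.
rewrite /bp /bm E !ltcE !Re_div2 !Im_div2 /=; split; apply/andP; split; try (apply/eqP; lra); nra.
Qed.

Lemma det2 (R : comRingType) (A : 'M[R]_2) : \det A = A 0 0 * A 1 1 - A 0 1 * A 1 0.
Proof.
rewrite (expand_det_row _ 0) !big_ord_recr big_ord0 /= add0r /cofactor !det_mx11 !mxE /=.
have e1 : widen_ord (m:=2) (leqnSn 1) ord_max = 0 by apply/val_inj.
have e3 : lift (0 : 'I_2) (0 : 'I_1) = 1 :> 'I_2 by apply/val_inj.
have e4 : lift (ord_max : 'I_2) (0 : 'I_1) = 0 :> 'I_2 by apply/val_inj.
have e5 : (ord_max : 'I_2) = 1 by apply/val_inj.
rewrite e1 e3 e4 e5 expr0 expr1 mul1r mulN1r mulrN. by [].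
Qed.

Lemma trE (R : rcfType) fu fv gu gv rho gamma d : \tr (Emat fu fv gu gv rho gamma d : 'M[R]_2) = - rho * (1 + d) + gamma * (fu + gv).
Proof.
rewrite /mxtrace !big_ord_recr big_ord0 /= /Emat /Dmat /Bmat !mxE /=.
by rewrite add0r mulr1; ring.
Qed.

Lemma detE (R : rcfType) fu fv gu gv rho gamma d : \det (Emat fu fv gu gv rho gamma d : 'M[R]_2) = (gamma*fu - rho) * (gamma * gv - rho * d) - gamma^+2 * fv * gu.
Proof. rewrite det2 /Emat /Dmat /Bmat !mxE /=; ring. Qed.

Lemma detB (R : rcfType) fu fv gu gv : \det (Bmat fu fv gu gv : 'M[R]_2) = fu * gv - fv * gu.
Proof. by rewrite det2 !mxE. Qed.

Lemma beta1E (R : rcfType) (fu fv gu gv rho gamma d : R) :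
  beta1 fu fv gu gv rho gamma d =
  bp (- rho * (1 + d) + gamma * (fu + gv)) ((gamma*fu - rho) * (gamma * gv - rho * d) - gamma^+2 * fv * gu).
Proof. by rewrite /beta1 /bp trE detE. Qed.

Lemma beta2E (R : rcfType) (fu fv gu gv rho gamma d : R) :
  beta2 fu fv gu gv rho gamma d =
  bm (- rho * (1 + d) + gamma * (fu + gv)) ((gamma*fu - rho) * (gamma * gv - rho * d) - gamma^+2 * fv * gu).
Proof. by rewrite /beta2 /bm trE detE. Qed.

Lemma dkE (R : rcfType) (fu fv gu gv r g : R) : 0 < r -> r < g * fu -> gv < 0 ->
  dk fu fv gu gv r g * (r * (g * fu - r)) = g ^+ 2 * (fu * gv - fv * gu) - g * r * gv.
Proof.
move=> hr hg hgv; rewrite /dk detB ltr0_norm // mulfVK; first ring.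
by rewrite mulf_neq0 // ?gt_eqF // subr_gt0.
Qed.

Arguments dkE {R}.

Theorem lemma3p1 (R : rcfType) (rho : nat -> R) (fu fv gu gv gamma1 : R) :
  (* 0 < rho_1 <= rho_2 <= ... : positive Neumann eigenvalues of -Delta *)
  0 < rho 1%N ->
  (forall k : nat, (1 <= k)%N -> rho k <= rho k.+1) ->
  (* hypotheses on B *)
  0 < fu -> gv < 0 -> 0 < fu * gv - fv * gu -> fu + gv < 0 ->
  (* gamma1 : crossing point of the positive branches of Lambda_1, Lambda_2 *)
  rho 1%N < rho 2%N ->
  rho 2%N / fu < gamma1 ->
  dk fu fv gu gv (rho 1%N) gamma1 = dk fu fv gu gv (rho 2%N) gamma1 ->
  (* lambda in R_1 *)
  (forall gamma d : R,
      rho 1%N / fu < gamma < gamma1 ->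
      0 < d < dk fu fv gu gv (rho 1%N) gamma ->
      complex.Re (beta1 fu fv gu gv (rho 1%N) gamma d) < 0 /\
      complex.Re (beta2 fu fv gu gv (rho 1%N) gamma d) < 0) /\
  (* lambda in Lambda_1 *)
  (forall gamma : R,
      rho 1%N / fu < gamma < gamma1 ->
      beta1 fu fv gu gv (rho 1%N) gamma (dk fu fv gu gv (rho 1%N) gamma) = 0 /\
      beta2 fu fv gu gv (rho 1%N) gamma (dk fu fv gu gv (rho 1%N) gamma) < 0) /\
  (* lambda in R_2 *)
  (forall gamma d : R,
      rho 1%N / fu < gamma < gamma1 ->
      dk fu fv gu gv (rho 1%N) gamma < d < dk fu fv gu gv (rho 2%N) gamma ->
      0 < beta1 fu fv gu gv (rho 1%N) gamma d /\
      beta2 fu fv gu gv (rho 1%N) gamma d < 0) /\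
  (* k >= 2, lambda in Lambda_1 *)
  (forall (k : nat) (gamma : R), (2 <= k)%N ->
      rho 1%N / fu < gamma < gamma1 ->
      complex.Re (beta1 fu fv gu gv (rho k) gamma (dk fu fv gu gv (rho 1%N) gamma)) < 0 /\
      complex.Re (beta2 fu fv gu gv (rho k) gamma (dk fu fv gu gv (rho 1%N) gamma)) < 0).
Proof.
move=> hr1 hmono hfu hgv hdB htr h12 hg1 hcross.
have hk2 : forall k, (2 <= k)%N -> rho 2%N <= rho k.
  elim=> [//|k IH] hk; have [hk1|hk1] := leqP 2 k.
  - apply: le_trans (IH hk1) (hmono _ _); exact: ltnW.
  - have -> : k = 1%N by lia.
    exact: lexx.
set r1 := rho 1%N in hr1 hmono h12 hcross hk2 *.
set r2 := rho 2%N in h12 hg1 hcross hk2 *.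
set DB := fu * gv - fv * gu in hdB *.
have Hg : forall g, r1 / fu < g < gamma1 ->
   [/\ 0 < g, r1 < g * fu, 0 < r1 * (g * fu - r1),
       dk fu fv gu gv r1 g * (r1 * (g * fu - r1)) = g ^+ 2 * DB - g * r1 * gv
     & 0 < dk fu fv gu gv r1 g].
  move=> g /andP [hg _].
  have hg' : r1 < g * fu by rewrite -ltr_pdivrMr.
  have g0 : 0 < g by apply: lt_trans hg; exact: divr_gt0.
  have M0 : 0 < r1 * (g * fu - r1) by rewrite mulr_gt0 // subr_gt0.
  have KM := dkE fu fv gu gv r1 g hr1 hg' hgv.
  split => //.
  rewrite /dk detB ltr0_norm // divr_gt0 //; rewrite -/DB.
  have : 0 < g * r1 * - gv by rewrite !mulr_gt0 // oppr_gt0.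
  have : 0 < g ^+ 2 * DB by rewrite mulr_gt0 // exprn_gt0.
  lra.
split; [|split; [|split]].
- move=> g d hg /andP [d0 dK].
  have [g0 hg' M0 KM K0] := Hg g hg.
  set K := dk _ _ _ _ r1 g in KM K0 dK.
  rewrite beta1E beta2E; apply: b_stable.
  + have : 0 < r1 * (1 + d) by rewrite mulr_gt0 // ltr_wpDr // ltW.
    have : g * (fu + gv) < 0 by rewrite pmulr_rlt0.
    lra.
  + have -> : (g * fu - r1) * (g * gv - r1 * d) - g ^+ 2 * fv * gu
             = (K - d) * (r1 * (g * fu - r1)).
      apply/eqP; rewrite -subr_eq0.
      have -> : (g * fu - r1) * (g * gv - r1 * d) - g ^+ 2 * fv * gu -
                (K - d) * (r1 * (g * fu - r1))
              = - (K * (r1 * (g * fu - r1)) - (g ^+ 2 * DB - g * r1 * gv)) by rewrite /DB; ring.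
      by rewrite KM subrr oppr0.
    by rewrite mulr_gt0 // subr_gt0.
- move=> g hg.
  have [g0 hg' M0 KM K0] := Hg g hg.
  set K := dk _ _ _ _ r1 g in KM K0 *.
  rewrite beta1E beta2E.
  have -> : (g * fu - r1) * (g * gv - r1 * K) - g ^+ 2 * fv * gu = 0.
    have -> : (g * fu - r1) * (g * gv - r1 * K) - g ^+ 2 * fv * gu
              = - (K * (r1 * (g * fu - r1)) - (g ^+ 2 * DB - g * r1 * gv)) by rewrite /DB; ring.
    by rewrite KM subrr oppr0.
  apply: b_zero.
  have : 0 < r1 * (1 + K) by rewrite mulr_gt0 // ltr_wpDr // ltW.
  have : g * (fu + gv) < 0 by rewrite pmulr_rlt0.
  lra.
- move=> g d hg /andP [Kd _].
  have [g0 hg' M0 KM K0] := Hg g hg.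
  set K := dk _ _ _ _ r1 g in KM K0 Kd.
  rewrite beta1E beta2E; apply: b_saddle.
  have -> : (g * fu - r1) * (g * gv - r1 * d) - g ^+ 2 * fv * gu
             = (K - d) * (r1 * (g * fu - r1)).
    apply/eqP; rewrite -subr_eq0.
    have -> : (g * fu - r1) * (g * gv - r1 * d) - g ^+ 2 * fv * gu -
              (K - d) * (r1 * (g * fu - r1))
            = - (K * (r1 * (g * fu - r1)) - (g ^+ 2 * DB - g * r1 * gv)) by rewrite /DB; ring.
    by rewrite KM subrr oppr0.
  by rewrite pmulr_llt0 // subr_lt0.
have r20 : 0 < r2 by apply: lt_trans h12.
have g10 : 0 < gamma1 by apply: lt_trans hg1; exact: divr_gt0.
have hg1' : r2 < gamma1 * fu by rewrite -ltr_pdivrMr.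
pose P g := DB * fu * g ^+ 2 - DB * (r1 + r2) * g + r1 * r2 * gv.
have P1 : P gamma1 = 0.
  have hr1' : r1 < gamma1 * fu by apply: lt_trans hg1'.
  have KM1 := dkE fu fv gu gv r1 gamma1 hr1 hr1' hgv.
  have KM2 := dkE fu fv gu gv r2 gamma1 r20 hg1' hgv.
  rewrite -/DB -hcross in KM2.
  set L := dk _ _ _ _ r1 gamma1 in KM1 KM2.
  have : gamma1 * (r2 - r1) * P gamma1 = 0.
    have -> : gamma1 * (r2 - r1) * P gamma1 =
      (gamma1 ^+ 2 * DB - gamma1 * r1 * gv) * (r2 * (gamma1 * fu - r2))
      - (gamma1 ^+ 2 * DB - gamma1 * r2 * gv) * (r1 * (gamma1 * fu - r1)) by rewrite /P; ring.
    rewrite -KM1 -KM2; ring.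
  move/eqP; rewrite !mulf_eq0 => /orP [/orP [|]|/eqP //] /eqP h; exfalso; lra.
move=> k g hk hg.
have [g0 hg' M0 KM K0] := Hg g hg.
set K := dk _ _ _ _ r1 g in KM K0 *.
have rk2 := hk2 k hk.
set rk := rho k in rk2 *.
have rk0 : 0 < rk by apply: lt_le_trans rk2.
have Pg : P g < 0.
  have : P g * gamma1 < 0.
    have -> : P g * gamma1 = P g * gamma1 - P gamma1 * g by rewrite P1 mul0r subr0.
    have -> : P g * gamma1 - P gamma1 * g = (g - gamma1) * (DB * fu * g * gamma1 - r1 * r2 * gv)
      by rewrite /P; ring.
    rewrite nmulr_rlt0 ?subr_lt0; last by case/andP: hg.
    have : 0 < DB * fu * g * gamma1 by rewrite !mulr_gt0.
    have : 0 < r1 * r2 * - gv by rewrite !mulr_gt0 // oppr_gt0.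
    lra.
  by rewrite pmulr_llt0.
have crux : 0 < K * r1 * r2 - g ^+ 2 * DB.
  have hM : 0 < g * fu - r1 by rewrite subr_gt0.
  rewrite -(pmulr_lgt0 _ hM).
  have -> : (K * r1 * r2 - g ^+ 2 * DB) * (g * fu - r1) =
            (K * (r1 * (g * fu - r1))) * r2 - g ^+ 2 * DB * (g * fu - r1) by ring.
  rewrite KM.
  have -> : (g ^+ 2 * DB - g * r1 * gv) * r2 - g ^+ 2 * DB * (g * fu - r1) = g * - P g
    by rewrite /P; ring.
  by rewrite mulr_gt0 // oppr_gt0.
rewrite beta1E beta2E; apply: b_stable.
- have : 0 < rk * (1 + K) by rewrite mulr_gt0 // ltr_wpDr // ltW.
  have : g * (fu + gv) < 0 by rewrite pmulr_rlt0.
  lra.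
- rewrite -(pmulr_rgt0 _ hr1).
  have -> : r1 * ((g * fu - rk) * (g * gv - rk * K) - g ^+ 2 * fv * gu)
          = (rk - r1) * (K * rk * r1 - g ^+ 2 * DB)
            - rk * (K * (r1 * (g * fu - r1)) - (g ^+ 2 * DB - g * r1 * gv)) by rewrite /DB; ring.
  rewrite KM subrr mulr0 subr0 mulr_gt0 // ?subr_gt0; first exact: lt_le_trans rk2.
  have : K * r1 * r2 <= K * rk * r1.
    rewrite mulrAC; apply: ler_wpM2r; [exact: ltW | apply: ler_wpM2l; [exact: ltW | exact: rk2]].
  lra.
Qed.
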